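(* Let $\mathcal{A}$ and $\mathcal{B}$ be tile sets with $\mathcal{B}\subseteq\mathcal{A}$ (with consistent frequencies, the frequencies of tiles in $\mathcal{B}$ being those in $\mathcal{A}$). Then \[ \mathrm{KL}(\mathcal{A}\,\|\,\mathcal{B})=\sum_{i,j}\sum_{v\in\{0,1\}}p^*_{\mathcal{A}}((i,j)=v)\log\frac{p^*_{\mathcal{A}}((i,j)=v)}{p^*_{\mathcal{B}}((i,j)=v)}. \]
   Context: Fix $n,m\ge1$; $\mathcal{D}$ is the set of $n\times m$ binary matrices. A tile is $T=(t(T),a(T))$ with nonempty row set $t(T)\subseteq\{1..n\}$ and column set $a(T)\subseteq\{1..m\}$, $\mathrm{area}(T)=t(T)\times a(T)$; $\mathrm{fr}(T;D)=\frac1{|\mathrm{area}(T)|}\sum_{(i,j)\in\mathrm{area}(T)}D(i,j)$, $\mathrm{fr}(T;p)=\sum_Dp(D)\mathrm{fr}(T;D)$, $p((i,j)=v)=\sum_{D:D(i,j)=v}p(D)$. For a tile set $\mathcal{T}$ with consistent target frequencies $\alpha_T$, $p^*_{\mathcal{T}}$ is the entropy-maximising distribution among $\{p:\mathrm{fr}(T;p)=\alpha_T\ \forall T\in\mathcal{T}\}$. $\mathrm{KL}(p\|q)=\sum_Dp(D)\log\frac{p(D)}{q(D)}$ (natural log, $0\log0=0$), and $\mathrm{KL}(\mathcal{T}\|\mathcal{U})$ means $\mathrm{KL}(p^*_{\mathcal{T}}\|p^*_{\mathcal{U}})$. *)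

(* Defs.v *)
From mathcomp Require Import all_boot.
From Stdlib Require Import Reals.

Set Implicit Arguments.
Unset Strict Implicit.
Unset Printing Implicit Defensive.

Definition rsum (T : finType) (P : pred T) (F : T -> R) : R :=
  \big[Rplus/0%R]_(x | P x) F x.

Section Tiles.
Variables n m : nat.

Definition bmat := {ffun 'I_n * 'I_m -> bool}.

(* a tile: (row set t(T), column set a(T)) *)
Definition tile := ({set 'I_n} * {set 'I_m})%type.
Definition tileset := {set tile}.

Definition tile_ok (T : tile) : Prop := T.1 != set0 /\ T.2 != set0.

Definition area (T : tile) : {set 'I_n * 'I_m} := setX T.1 T.2.

Definition b2R (b : bool) : R := if b then 1%R else 0%R.

Definition fr_mat (T : tile) (D : bmat) : R :=
  (/ INR #|area T| * rsum (fun c => c \in area T) (fun c => b2R (D c)))%R.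

Definition is_distr (p : bmat -> R) : Prop :=
  (forall D, 0 <= p D)%R /\ rsum predT p = 1%R.

Definition fr_distr (T : tile) (p : bmat -> R) : R :=
  rsum predT (fun D => p D * fr_mat T D)%R.

Definition feasible (A : tileset) (alpha : tile -> R) (p : bmat -> R) : Prop :=
  is_distr p /\ forall T, T \in A -> fr_distr T p = alpha T.

(* Shannon entropy, natural log; 0 log 0 = 0 holds since 0 * x = 0 *)
Definition entropy (p : bmat -> R) : R :=
  (- rsum predT (fun D => p D * ln (p D)))%R.

Definition is_maxent (A : tileset) (alpha : tile -> R) (p : bmat -> R) : Prop :=
  feasible A alpha p /\
  forall q, feasible A alpha q -> (entropy q <= entropy p)%R.

(* KL(p || q), natural log; terms with p D = 0 vanish (0 log 0 = 0) *)
Definition KL (p q : bmat -> R) : R :=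
  rsum predT (fun D => p D * ln (p D / q D))%R.

Definition cell_marg (p : bmat -> R) (c : 'I_n * 'I_m) (v : bool) : R :=
  rsum (fun D : bmat => D c == v) p.

End Tiles.

(* Main.v *)
Require Import Defs.
From HB Require Import structures.
From mathcomp Require Import all_boot.
From Stdlib Require Import Reals Lra.

Set Implicit Arguments.
Unset Strict Implicit.
Unset Printing Implicit Defensive.

Local Open Scope R_scope.

Lemma Rplus_A : associative Rplus. Proof. by move=> x y z; rewrite Rplus_assoc. Qed.
Lemma Rmult_A : associative Rmult. Proof. by move=> x y z; rewrite Rmult_assoc. Qed.
HB.instance Definition _ := Monoid.isComLaw.Build R 0 Rplus Rplus_A Rplus_comm Rplus_0_l.
HB.instance Definition _ := Monoid.isComLaw.Build R 1 Rmult Rmult_A Rmult_comm Rmult_1_l.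
HB.instance Definition _ := Monoid.isMulLaw.Build R 0 Rmult Rmult_0_l Rmult_0_r.
HB.instance Definition _ := Monoid.isAddLaw.Build R Rmult Rplus Rmult_plus_distr_r Rmult_plus_distr_l.

Lemma ln_le1 x : 0 < x -> ln x <= x - 1.
Proof. move=> hx; have := exp_ineq1_le (ln x); rewrite exp_ln //; lra. Qed.

Lemma ln_lt1 x : 0 < x -> x <> 1 -> ln x < x - 1.
Proof.
move=> hx h1; have h : ln x <> 0.
  by move=> h0; apply: h1; rewrite -(exp_ln x) // h0 exp_0.
have := exp_ineq1 (ln x) h; rewrite exp_ln //; lra.
Qed.

Lemma ln_div x y : 0 < x -> 0 < y -> ln (x / y) = ln x - ln y.
Proof.
move=> hx hy; have hy' := Rinv_0_lt_compat _ hy.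
by rewrite /Rdiv ln_mult // ln_Rinv.
Qed.

Lemma gibbs_pt x y : 0 <= x -> 0 <= y -> (0 < x -> 0 < y) ->
  x - y <= x * ln x - x * ln y.
Proof.
move=> hx hy hxy; case: (Req_dec x 0) => [->|hx0]; first lra.
have hx' : 0 < x by lra.
have hy' := hxy hx'.
have hq : 0 < y / x by apply: Rdiv_lt_0_compat.
have := ln_le1 hq; rewrite ln_div // => h.
have : x * (ln y - ln x) <= x * (y / x - 1) by apply: Rmult_le_compat_l; lra.
have -> : x * (y / x - 1) = y - x by field; lra.
lra.
Qed.

Lemma gibbs_eq x y : 0 <= x -> 0 <= y -> (0 < x -> 0 < y) ->
  x - y = x * ln x - x * ln y -> x = y.
Proof.
move=> hx hy hxy E; case: (Req_dec x 0) => [x0|hx0].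
  by move: E; rewrite x0 !Rmult_0_l; lra.
have hx' : 0 < x by lra.
have hy' := hxy hx'.
have hq : 0 < y / x by apply: Rdiv_lt_0_compat.
case: (Req_dec (y / x) 1) => [h1|h1].
  have : y = y / x * x by field; lra.
  by rewrite h1 Rmult_1_l.
have := ln_lt1 hq h1; rewrite ln_div // => h.
have : x * (ln y - ln x) < x * (y / x - 1) by apply: Rmult_lt_compat_l; lra.
have -> : x * (y / x - 1) = y - x by field; lra.
lra.
Qed.

Section Sums.
Variable T : finType.
Implicit Types (P : pred T) (F G : T -> R).

Lemma rsumD P F G : rsum P (fun x => F x + G x) = rsum P F + rsum P G.
Proof. by rewrite /rsum big_split. Qed.

Lemma rsumZ P a F : rsum P (fun x => a * F x) = a * rsum P F.
Proof. by rewrite /rsum big_distrr. Qed.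

Lemma rsum_ext P F G : (forall x, P x -> F x = G x) -> rsum P F = rsum P G.
Proof. by move=> h; rewrite /rsum; apply: eq_bigr. Qed.

Lemma rsumN P F : rsum P (fun x => - F x) = - rsum P F.
Proof.
rewrite (@rsum_ext P _ (fun x => -1 * F x)); last by move=> x _; ring.
rewrite rsumZ; ring.
Qed.

Lemma rsumB P F G : rsum P (fun x => F x - G x) = rsum P F - rsum P G.
Proof. by rewrite /Rminus rsumD rsumN. Qed.

Lemma rsum_ge0 P F : (forall x, P x -> 0 <= F x) -> 0 <= rsum P F.
Proof.
move=> h; rewrite /rsum; apply: (big_ind (fun x => 0 <= x)) => //; first lra.
by move=> a b ha hb; lra.
Qed.

Lemma rsum_le P F G : (forall x, P x -> F x <= G x) -> rsum P F <= rsum P G.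
Proof.
move=> h; rewrite /rsum; apply: (big_ind2 (fun x y => x <= y)) => //; first lra.
by move=> a b c d ha hb; lra.
Qed.

Lemma rsumD1 P F x : P x -> rsum P F = F x + rsum (fun y => P y && (y != x)) F.
Proof. by move=> hx; rewrite /rsum (bigD1 x). Qed.

Lemma rsum_ge_term P F x : (forall y, P y -> 0 <= F y) -> P x -> F x <= rsum P F.
Proof.
move=> h hx; rewrite (rsumD1 F hx).
have : 0 <= rsum (fun y => P y && (y != x)) F.
  by apply: rsum_ge0 => y /andP [hy _]; apply: h.
lra.
Qed.

Lemma rsum_eq0 P F : (forall y, P y -> 0 <= F y) -> rsum P F = 0 ->
  forall x, P x -> F x = 0.
Proof.
move=> h E x hx; have := rsum_ge_term h hx; have := h x hx.
have : 0 <= rsum (fun y => P y && (y != x)) F.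
  by apply: rsum_ge0 => y /andP [hy _]; apply: h.
move: E; rewrite (rsumD1 F hx); lra.
Qed.

Lemma rsum_exchange (U : finType) (F : T -> U -> R) :
  rsum predT (fun x => rsum predT (F x)) = rsum predT (fun y => rsum predT (fun x => F x y)).
Proof. by rewrite /rsum exchange_big. Qed.

End Sums.

Section Mats.
Variables n m : nat.
Local Notation I := ('I_n * 'I_m)%type.
Local Notation M := (bmat n m).
Implicit Types (p q : M -> R) (D : M) (c : I).

Lemma marg_split p c (F : bool -> R) :
  rsum predT (fun D => p D * F (D c)) = rsum predT (fun v => cell_marg p c v * F v).
Proof.
rewrite /rsum /cell_marg /rsum big_bool /= !big_distrl /=.
rewrite (bigID (fun D : M => D c)) /=; congr (_ + _).
  by apply: eq_big => [D|D /= ->] //; case: (D c).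
by apply: eq_big => [D|D /= /negbTE ->] //; case: (D c).
Qed.

Lemma marg_sum p c : cell_marg p c true + cell_marg p c false = rsum predT p.
Proof.
have := marg_split p c (fun _ => 1).
rewrite /rsum big_bool /= !Rmult_1_r => <-.
by apply: eq_bigr => D _; rewrite Rmult_1_r.
Qed.

Lemma marg_ge p c D : (forall D, 0 <= p D) -> p D <= cell_marg p c (D c).
Proof. by move=> h; apply: rsum_ge_term => //; rewrite eqxx. Qed.

Lemma marg_ge0 p c v : (forall D, 0 <= p D) -> 0 <= cell_marg p c v.
Proof. by move=> h; apply: rsum_ge0. Qed.

Definition prodm p D : R := \big[Rmult/1]_c cell_marg p c (D c).

Lemma prod_ge0 (F : I -> R) : (forall c, 0 <= F c) -> 0 <= \big[Rmult/1]_c F c.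
Proof.
move=> h; apply: (big_ind (fun x => 0 <= x)) => //; first lra.
by move=> a b ha hb; apply: Rmult_le_pos.
Qed.

Lemma prod_gt0 (F : I -> R) : (forall c, 0 < F c) -> 0 < \big[Rmult/1]_c F c.
Proof.
move=> h; apply: (big_ind (fun x => 0 < x)) => //; first lra.
by move=> a b ha hb; apply: Rmult_lt_0_compat.
Qed.

Lemma ln_prod (F : I -> R) : (forall c, 0 < F c) ->
  ln (\big[Rmult/1]_c F c) = rsum predT (fun c => ln (F c)).
Proof.
move=> h; rewrite /rsum.
have : 0 < \big[Rmult/1]_(c | predT c) F c /\
   ln (\big[Rmult/1]_(c | predT c) F c) = \big[Rplus/0]_(c | predT c) ln (F c).
  apply: (big_rec2 (fun x y => 0 < x /\ ln x = y)) => [|i x y _ [hx <-]].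
    by split; [lra | exact: ln_1].
  by split; [apply: Rmult_lt_0_compat | rewrite ln_mult].
by case.
Qed.

Lemma sum_prod (F : I -> bool -> R) :
  rsum predT (fun D : M => \big[Rmult/1]_c F c (D c)) =
  \big[Rmult/1]_c (F c true + F c false).
Proof.
have E := @bigA_distr_bigA R 0 1 Rmult Rplus I bool F.
rewrite /rsum; transitivity (\big[Rmult/1]_(i : I) \big[Rplus/0]_(j : bool) F i j).
  by rewrite E.
by apply: eq_bigr => c _; rewrite big_bool.
Qed.

Lemma prodm_sum p : is_distr p -> rsum predT (prodm p) = 1.
Proof.
move=> [h0 h1]; rewrite /prodm sum_prod.
rewrite (eq_bigr (fun _ => 1)) ?big1_eq // => c _.
by rewrite marg_sum.
Qed.

Lemma prodm_marg p c v : is_distr p -> cell_marg (prodm p) c v = cell_marg p c v.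
Proof.
move=> [h0 h1].
pose F' := fun (i : I) (w : bool) =>
  if i == c then (if w == v then cell_marg p i w else 0) else cell_marg p i w.
have E := sum_prod F'.
have -> : cell_marg (prodm p) c v = rsum predT (fun D : M => \big[Rmult/1]_i F' i (D i)).
  rewrite /cell_marg /rsum /prodm (big_mkcond (fun D : M => D c == v)) /=.
  apply: eq_bigr => D _; rewrite (bigD1 c) //= [in RHS](bigD1 c) //= /F' eqxx.
  case: eqP => _; last by rewrite Rmult_0_l.
  congr (_ * _); apply: eq_bigr => i /negbTE -> //.
rewrite E (bigD1 c) //= /F' eqxx.
rewrite (eq_bigr (fun _ => 1)); last first.
  by move=> i /negbTE ->; rewrite marg_sum.
rewrite big1_eq Rmult_1_r.
clear E F'; case: v => /=; lra.
Qed.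

Lemma prodm_ge0 p D : is_distr p -> 0 <= prodm p D.
Proof. by move=> [h0 _]; apply: prod_ge0 => c; apply: marg_ge0. Qed.

Lemma prodm_distr p : is_distr p -> is_distr (prodm p).
Proof. by move=> hp; split; [move=> D; apply: prodm_ge0 | apply: prodm_sum]. Qed.

Lemma fr_marg (T : tile n m) q :
  fr_distr T q = / INR #|area T| * rsum (fun c => c \in area T) (fun c => cell_marg q c true).
Proof.
rewrite /fr_distr /fr_mat.
rewrite (@rsum_ext _ _ _ (fun D => / INR #|area T| *
   rsum (fun c => c \in area T) (fun c => q D * b2R (D c)))); last first.
  move=> D _; rewrite /rsum big_distrr /= big_distrr /=.
  rewrite [RHS]big_distrr /=; apply: eq_bigr => c _; ring.
rewrite (@rsumZ _ predT (/ INR #|area T|) (fun D => rsum (fun c => c \in area T) (fun c => q D * b2R (D c)))).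
congr (_ * _).
rewrite /rsum exchange_big /=; apply: eq_bigr => c _.
have := marg_split q c b2R; rewrite /rsum => ->.
by rewrite big_bool /= /b2R; ring.
Qed.

Lemma prodm_feasible X alpha p : feasible X alpha p -> feasible X alpha (prodm p).
Proof.
move=> [hd hf]; split; first exact: prodm_distr.
move=> T hT; rewrite -(hf T hT) !fr_marg; congr (_ * _).
by apply: rsum_ext => c _; rewrite prodm_marg.
Qed.

End Mats.

Lemma conc_pt a b t : 0 <= a -> 0 <= b -> 0 < t < 1 ->
  ((1 - t) * b + t * a) * ln ((1 - t) * b + t * a) <=
  (1 - t) * (b * ln b) + t * (a * ln a).
Proof.
move=> ha hb ht.
have h1 : 0 <= (1 - t) * b by apply: Rmult_le_pos; lra.
have h2 : 0 <= t * a by apply: Rmult_le_pos; lra.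
set s := (1 - t) * b + t * a.
case: (Req_dec s 0) => [s0|s0].
  have hb0 : b = 0.
    have : (1 - t) * b = 0 by rewrite /s in s0; lra.
    by case/Rmult_integral => //; lra.
  have ha0 : a = 0.
    have : t * a = 0 by rewrite /s in s0; lra.
    by case/Rmult_integral => //; lra.
  rewrite s0 hb0 ha0; lra.
have hs : 0 < s by rewrite /s in s0 *; lra.
have gb := @gibbs_pt b s hb (Rlt_le _ _ hs) (fun _ => hs).
have ga := @gibbs_pt a s ha (Rlt_le _ _ hs) (fun _ => hs).
have : (1 - t) * (b - s) <= (1 - t) * (b * ln b - b * ln s) by apply: Rmult_le_compat_l; lra.
have : t * (a - s) <= t * (a * ln a - a * ln s) by apply: Rmult_le_compat_l; lra.
rewrite /s; lra.
Qed.

Section Mats2.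
Variables n m : nat.
Local Notation I := ('I_n * 'I_m)%type.
Local Notation M := (bmat n m).
Implicit Types (p q : M -> R) (D : M) (c : I).

Lemma sum_log p (h : M -> R) (f : I -> bool -> R) : (forall D, 0 <= p D) ->
  (forall D, 0 < p D -> ln (h D) = rsum predT (fun c => f c (D c))) ->
  rsum predT (fun D => p D * ln (h D)) =
  rsum predT (fun c => rsum predT (fun v => cell_marg p c v * f c v)).
Proof.
move=> h0 hl.
rewrite (@rsum_ext _ _ _ (fun D => rsum predT (fun c => p D * f c (D c)))); last first.
  move=> D _; case: (Rle_lt_or_eq_dec _ _ (h0 D)) => [hp|<-].
    by rewrite hl // /rsum big_distrr.
  rewrite Rmult_0_l /rsum big1 // => c _; ring.
rewrite rsum_exchange; apply: rsum_ext => c _.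
exact: (marg_split p c (f c)).
Qed.

Lemma maxent_prod X alpha p : is_maxent X alpha p -> forall D, p D = prodm p D.
Proof.
move=> [hf hmax]; have [hd _] := hf; have [h0 h1] := hd.
have hq := prodm_feasible hf; have [hqd _] := hq; have [hq0 hq1] := hqd.
have HE := hmax _ hq.
set S := rsum predT (fun c => rsum predT (fun v => cell_marg p c v * ln (cell_marg p c v))).
have pos : forall D, 0 < p D -> forall c, 0 < cell_marg p c (D c).
  by move=> D hD c; apply: Rlt_le_trans hD (marg_ge _ _ h0).
have E1 : rsum predT (fun D => p D * ln (prodm p D)) = S.
  apply: sum_log => // D hD; rewrite /prodm ln_prod //; exact: pos.
have E2 : rsum predT (fun D => prodm p D * ln (prodm p D)) = S.
  rewrite /S -(@rsum_ext _ predT (fun c => rsum predT (fun v => cell_marg (prodm p) c v * ln (cell_marg p c v)))); last first.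
    by move=> c _; apply: rsum_ext => v _; rewrite prodm_marg.
  apply: sum_log => // D hD; rewrite {1}/prodm ln_prod // => c.
  rewrite -(prodm_marg _ _ hd); apply: Rlt_le_trans hD (marg_ge _ _ hq0).
have posq : forall D, 0 < p D -> 0 < prodm p D.
  by move=> D hD; apply: prod_gt0 => c; apply: pos.
have G : forall D, p D - prodm p D <= p D * ln (p D) - p D * ln (prodm p D).
  by move=> D; apply: gibbs_pt => //; apply: posq.
have SG := @rsum_le _ predT _ _ (fun D _ => G D).
rewrite !rsumB h1 hq1 E1 in SG.
move: HE; rewrite /entropy E2 => HE.
set Hp := rsum predT (fun D => p D * ln (p D)) in SG HE.
have Eq : Hp = S by lra.
pose d := fun D => (p D * ln (p D) - p D * ln (prodm p D)) - (p D - prodm p D).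
have d0 : forall D, predT D -> 0 <= d D by move=> D _; have := G D; rewrite /d; lra.
have ds : rsum predT d = 0.
  by rewrite /d rsumB !rsumB h1 hq1 E1 -/Hp Eq; ring.
move=> D; apply: gibbs_eq => //; first exact: posq.
have := rsum_eq0 d0 ds (x:=D) isT; rewrite /d; lra.
Qed.

Lemma support Y alpha pB pA : is_maxent Y alpha pB -> feasible Y alpha pA ->
  forall D, 0 < pA D -> 0 < pB D.
Proof.
move=> [[[hb0 hb1] hbc] hmax] [[ha0 ha1] hac] D0 ha.
case: (Rlt_le_dec 0 (pB D0)) => // hle.
have hb : pB D0 = 0 by have := hb0 D0; lra.
exfalso.
set a0 := pA D0.
have ha' : 0 < a0 by [].
set K := entropy pB - entropy pA.
set L := Rmin (-1) ((- K) / a0 - 1).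
have HL : a0 * L <= - K - a0.
  have : L <= (- K) / a0 - 1 by apply: Rmin_r.
  move=> hl; have : a0 * L <= a0 * ((- K) / a0 - 1) by apply: Rmult_le_compat_l; lra.
  have -> : a0 * ((- K) / a0 - 1) = - K - a0 by field; lra.
  done.
set t := exp L.
have ht0 : 0 < t by apply: exp_pos.
have ht1 : t < 1.
  rewrite /t -exp_0; apply: exp_increasing.
  have := Rmin_l (-1) ((- K) / a0 - 1); rewrite -/L; lra.
pose s := fun D => (1 - t) * pB D + t * pA D.
have s0 : forall D, 0 <= s D.
  move=> D; have := hb0 D; have := ha0 D => ?? .
  rewrite /s; apply: Rplus_le_le_0_compat; apply: Rmult_le_pos; lra.
have hs : feasible Y alpha s.
  split; first split => //.
    rewrite /s rsumD (rsumZ _ _ pB) (rsumZ _ _ pA) ha1 hb1; ring.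
  move=> T hT; rewrite /fr_distr /s.
  rewrite (@rsum_ext _ _ _ (fun D => (1 - t) * (pB D * fr_mat T D) + t * (pA D * fr_mat T D))); last first.
    by move=> D _; ring.
  rewrite rsumD (rsumZ _ _ (fun D => pB D * fr_mat T D)) (rsumZ _ _ (fun D => pA D * fr_mat T D)).
  have := hbc T hT; have := hac T hT; rewrite /fr_distr => -> ->; ring.
have HE := hmax _ hs.
pose Phi := fun D => (1 - t) * (pB D * ln (pB D)) + t * (pA D * ln (pA D)) - s D * ln (s D).
have Phi0 : forall D, predT D -> 0 <= Phi D.
  move=> D _; have := @conc_pt (pA D) (pB D) t (ha0 D) (hb0 D) (conj ht0 ht1).
  rewrite /Phi /s; lra.
have PhiD0 : Phi D0 = - t * a0 * L.
  rewrite /Phi /s hb -/a0 Rmult_0_r Rplus_0_l Rmult_0_l Rmult_0_r ln_mult //.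
  rewrite /t ln_exp; ring.
have hge := rsum_ge_term Phi0 (x:=D0) isT.
rewrite PhiD0 /Phi rsumB rsumD (rsumZ _ _ (fun D => pB D * ln (pB D)))
  (rsumZ _ _ (fun D => pA D * ln (pA D))) in hge.
move: HE; rewrite /entropy => HE.
have : - t * a0 * L <= t * K.
  rewrite /K /entropy.
  move: hge HE.
  set SA := rsum predT (fun D => pA D * ln (pA D)).
  set SB := rsum predT (fun D => pB D * ln (pB D)).
  set SS := rsum predT (fun D => s D * ln (s D)).
  move=> hge HE.
  have : t * (- SB - - SA) = t * SA - t * SB by ring.
  lra.
move=> h.
have : t * (- a0 * L) <= t * K by lra.
move/(Rmult_le_reg_l _ _ _ ht0); lra.
Qed.

End Mats2.

Local Close Scope R_scope.

Theorem theorem4 (n m : nat) (Hn : (1 <= n)%N) (Hm : (1 <= m)%N)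
  (A B : tileset n m) (alpha : tile n m -> R)
  (HA : forall T, T \in A -> tile_ok T)
  (HBA : B \subset A)
  (Hcons : exists p, feasible A alpha p)
  (pA pB : bmat n m -> R)
  (HpA : is_maxent A alpha pA)
  (HpB : is_maxent B alpha pB) :
  KL pA pB =
  rsum predT (fun c : 'I_n * 'I_m =>
    rsum predT (fun v : bool =>
      (cell_marg pA c v * ln (cell_marg pA c v / cell_marg pB c v))%R)).
Proof.
have hpA := maxent_prod HpA; have hpB := maxent_prod HpB.
have [[hdA hcA] _] := HpA; have [[[hB0 _] _] _] := HpB.
have [ha0 _] := hdA.
have hfAB : feasible B alpha pA.
  by split => // T hT; apply: hcA; apply: (subsetP HBA).
have supp := support HpB hfAB.
rewrite /KL; apply: sum_log => // D hD.
have hDB := supp D hD.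
rewrite ln_div // {1}hpA {1}hpB /prodm !ln_prod -?rsumB //.
- by apply: rsum_ext => c _; rewrite ln_div //;
   apply: Rlt_le_trans (marg_ge _ _ _); eauto.
- by move=> c; apply: Rlt_le_trans hDB (marg_ge _ _ hB0).
- by move=> c; apply: Rlt_le_trans hD (marg_ge _ _ ha0).
Qed.
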